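(* Let $V=\{v_1,\dots,v_m\}\subset\mathbb{R}^n$. For any $w\in\mathbb{R}^m_{>0}$ we have $\mathrm{NC}(f_{V,\mathbf{1}_m})=\mathrm{NC}(f_{V,w})$. Moreover, the covector decomposition of $H=\{x\in\mathbb{R}^n:\sum_j x_j=0\}$ induced by $V$ agrees with $\overline{\mathrm{NC}}(f_{V,w})$ for any $w\in\mathbb{R}^m_{>0}$.
   Context: Write $v_i=(v_{i1},\dots,v_{in})$ and $f_{V,w}(x)=\sum_{i=1}^m w_i\max_{j\in[n]}(x_j-v_{ij})$, viewed as the tropical signomial $\max_{(j_1,\dots,j_m)\in[n]^m}\sum_i w_i(x_{j_i}-v_{ij_i})$ with terms of equal exponent combined (largest coefficient kept); $f_{V,\mathbf{1}_m}$ is the case of all weights $1$. For a tropical signomial $f(x)=\max_{a\in A}(c_a+a\cdot x)$ with distinct exponents, let $B(x)=\{a: c_a+a\cdot x=f(x)\}$; the normal complex $\mathrm{NC}(f)$ is the polyhedral complex of sets $\{y\in\mathbb{R}^n: B(x)\subseteq B(y)\}$, $x\in\mathbb{R}^n$ (the projections of the faces of the epigraph of $f$), and $\overline{\mathrm{NC}}(f)$ is the complex of their intersections with $H$. Covector decomposition: for $x$ and $i$ let $S_i(x)=\operatorname{argmax}_j(x_j-v_{ij})$; for a tuple $S=(S_1,\dots,S_m)$ of nonempty subsets of $[n]$ let $C_S=\{x\in H: S_i\subseteq S_i(x)\ \forall i\}$; the covector decomposition is the polyhedral complex of nonempty $C_S$ (the subdivision induced by the max-tropical hyperplanes centered at the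 $v_i$). *)

(* Defs.v *)
From HB Require Import structures.
From mathcomp Require Import all_boot all_order all_algebra.
Set Implicit Arguments. Unset Strict Implicit. Unset Printing Implicit Defensive.
Import Order.TTheory GRing.Theory Num.Theory.
Local Open Scope ring_scope.

Section Tropical.
Variable R : realFieldType.
Variable n : nat.

Definition pset := 'rV[R]_n -> Prop.

Definition dotv (a x : 'rV[R]_n) : R := \sum_(j < n) a 0 j * x 0 j.

Definition seqmax (s : seq R) : R := foldr Num.max (head 0 s) s.

(* A tropical signomial given by a finite family of terms (c t) + (e t).x,
   terms with equal exponent being combined by keeping the largest coefficient. *)
Variable T : finType.
Variable c : T -> R.
Variable e : T -> 'rV[R]_n.

Definition texps : seq 'rV[R]_n := undup [seq e t | t <- enum T].
Definition tcoef (a : 'rV[R]_n) : R := seqmax [seq c t | t <- enum T & e t == a].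
Definition tval (x : 'rV[R]_n) : R := seqmax [seq tcoef a + dotv a x | a <- texps].
Definition Bset (x : 'rV[R]_n) : seq 'rV[R]_n :=
  [seq a <- texps | tcoef a + dotv a x == tval x].
Definition NCcell (x : 'rV[R]_n) : pset := fun y => {subset Bset x <= Bset y}.
Definition NC : pset -> Prop := fun C => exists x, C = NCcell x.
End Tropical.

Definition Hyp (R : realFieldType) (n : nat) : pset R n :=
  fun x => \sum_(j < n) x 0 j = 0.

Definition NCbar (R : realFieldType) (n : nat) (T : finType)
  (c : T -> R) (e : T -> 'rV[R]_n) : pset R n -> Prop :=
  fun D => exists C, NC c e C /\ D = (fun x => C x /\ Hyp x).

(* f_{V,w}: terms indexed by tuples (j_1,...,j_m) in [n]^m *)
Section FVw.
Variables (R : realFieldType) (m n : nat) (V : 'M[R]_(m, n)) (w : 'I_m -> R).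
Definition fVw_coef (t : {ffun 'I_m -> 'I_n}) : R := - \sum_(i < m) w i * V i (t i).
Definition fVw_exp (t : {ffun 'I_m -> 'I_n}) : 'rV[R]_n :=
  \row_(j < n) \sum_(i < m | t i == j) w i.
End FVw.

Definition argmaxset (R : realFieldType) (m n : nat) (V : 'M[R]_(m, n))
  (x : 'rV[R]_n) (i : 'I_m) : {set 'I_n} :=
  [set j | [forall k, x 0 k - V i k <= x 0 j - V i j]].

Definition covcell (R : realFieldType) (m n : nat) (V : 'M[R]_(m, n))
  (S : {ffun 'I_m -> {set 'I_n}}) : pset R n :=
  fun x => Hyp x /\ forall i, S i \subset argmaxset V x i.

Definition covdec (R : realFieldType) (m n : nat) (V : 'M[R]_(m, n)) : pset R n -> Prop :=
  fun C => exists S : {ffun 'I_m -> {set 'I_n}},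
    (forall i, S i != set0) /\ (exists x, covcell V S x) /\ C = covcell V S.

(* Main.v *)
Require Import Defs.
From HB Require Import structures.
From mathcomp Require Import all_boot all_order all_algebra ring lra.
From Stdlib Require Import Classical FunctionalExtensionality PropExtensionality.
Set Implicit Arguments. Unset Strict Implicit. Unset Printing Implicit Defensive.
Import Order.TTheory GRing.Theory Num.Theory.
Local Open Scope ring_scope.

Section Gen.
Variables (R : realFieldType) (n : nat) (T : finType) (c : T -> R) (e : T -> 'rV[R]_n).

Lemma foldr_max_ge (d : R) s : d <= foldr Num.max d s /\ forall y, y \in s -> y <= foldr Num.max d s.
Proof.
elim: s => [|a s [IH1 IH2]] /=; first by split.
split; first by rewrite le_max IH1 orbT.
move=> y; rewrite in_cons => /orP [/eqP->|/IH2 H]; rewrite le_max; first by rewrite lexx.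
by rewrite H orbT.
Qed.

Lemma foldr_max_in (d : R) s : foldr Num.max d s \in d :: s.
Proof.
elim: s => [|a s IH] /=; first by rewrite mem_seq1.
have [H|H] := leP a (foldr Num.max d s).
  move: IH; rewrite !in_cons => /orP[->|->]; rewrite ?orbT //.
by rewrite !in_cons eqxx orbT.
Qed.

Lemma seqmax_ge (s : seq R) y : y \in s -> y <= seqmax s.
Proof. by move=> H; case: (foldr_max_ge (head 0 s) s) => _; apply. Qed.

Lemma seqmax_in (s : seq R) : s != [::] -> seqmax s \in s.
Proof.
case: s => [|a s] // _; have := foldr_max_in a (a :: s).
by rewrite /seqmax /= in_cons => /orP[/eqP->|]; rewrite ?mem_head.
Qed.

Definition tv t x := c t + dotv (e t) x.

Lemma tcoef_ge t : c t <= tcoef c e (e t).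
Proof.
apply: seqmax_ge; apply: map_f; by rewrite mem_filter eqxx mem_enum.
Qed.

Lemma tcoef_ex a : a \in texps e -> exists t, e t = a /\ c t = tcoef c e a.
Proof.
rewrite mem_undup => /mapP [t0 _ Ht0].
have : tcoef c e a \in [seq c t | t <- enum T & e t == a].
  apply: seqmax_in; apply/eqP => /(f_equal size); rewrite size_map.
  move/eqP; rewrite size_eq0 => /eqP Hf.
  have : t0 \in [seq t <- enum T | e t == a] by rewrite mem_filter -Ht0 eqxx mem_enum.
  by rewrite Hf.
case/mapP => t; rewrite mem_filter => /andP[/eqP Ht _] ->; by exists t.
Qed.

Lemma tval_ge a x : a \in texps e -> tcoef c e a + dotv a x <= Defs.tval c e x.
Proof. by move=> Ha; apply: seqmax_ge; apply: map_f. Qed.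

Variable t0 : T.

Lemma tval_ex x : exists2 a, a \in texps e & tcoef c e a + dotv a x = Defs.tval c e x.
Proof.
have : Defs.tval c e x \in [seq tcoef c e a + dotv a x | a <- texps e].
  apply: seqmax_in; apply/eqP => /(f_equal size); rewrite size_map.
  move/eqP; rewrite size_eq0 => /eqP Hf.
  have : e t0 \in texps e by rewrite mem_undup map_f ?mem_enum.
  by rewrite Hf.
case/mapP => a Ha ->; by exists a.
Qed.

Lemma tv_le t x : tv t x <= Defs.tval c e x.
Proof.
have Ht : e t \in texps e by rewrite mem_undup map_f ?mem_enum.
apply: (le_trans _ (tval_ge x Ht)).
by rewrite /tv lerD2r tcoef_ge.
Qed.

Lemma tv_ex x : exists t, tv t x = Defs.tval c e x.
Proof.
case: (tval_ex x) => a Ha <-; case: (tcoef_ex Ha) => t [Ht1 Ht2].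
by exists t; rewrite /tv Ht1 Ht2.
Qed.

Lemma Bset_iff x a : a \in Bset c e x <-> exists t, e t = a /\ tv t x = Defs.tval c e x.
Proof.
rewrite mem_filter; split.
  case/andP => /eqP H Ha; case: (tcoef_ex Ha) => t [Ht1 Ht2].
  by exists t; rewrite /tv Ht1 Ht2.
case=> t [<- Ht]; rewrite mem_undup map_f ?mem_enum // andbT.
rewrite eq_le tval_ge ?mem_undup ?map_f ?mem_enum //.
by rewrite -Ht /tv lerD2r tcoef_ge.
Qed.

Lemma transfer t t' x y : tv t x = Defs.tval c e x -> e t' = e t ->
  tv t' y = Defs.tval c e y -> tv t y = Defs.tval c e y.
Proof.
move=> Hx He Hy.
have h1 := tv_le t' x. have h2 := tv_le t y.
move: h1 h2; rewrite -Hx -Hy /tv He => h1 h2.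
apply/eqP; rewrite eq_le h2 /=.
by move: h1; rewrite lerD2r => h1; rewrite lerD2r.
Qed.
End Gen.

Section F.
Variables (R : realFieldType) (m n : nat) (V : 'M[R]_(m, n)).
Hypothesis hn : (0 < n)%N.
Let j0 : 'I_n := Ordinal hn.

Definition am (x : 'rV[R]_n) i := [arg max_(j > j0) (x 0 j - V i j)]%O.

Lemma am_ge (x : 'rV[R]_n) i k : x 0 k - V i k <= x 0 (am x i) - V i (am x i).
Proof. by rewrite /am; case: arg_maxP => //= j _ H; apply: H. Qed.

Lemma inS (x : 'rV[R]_n) i j : j \in argmaxset V x i <-> forall k, x 0 k - V i k <= x 0 j - V i j.
Proof. by rewrite inE; split => [/forallP|H]; last apply/forallP. Qed.

Lemma am_in (x : 'rV[R]_n) i : am x i \in argmaxset V x i.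
Proof. by apply/inS => k; apply: am_ge. Qed.

Variable w : 'I_m -> R.
Hypothesis hw : forall i, 0 < w i.

Notation cf := (fVw_coef V w).
Notation ef := (fVw_exp w).

Lemma tv_F t x : tv cf ef t x = \sum_i w i * (x 0 (t i) - V i (t i)).
Proof.
rewrite /tv /fVw_coef /dotv.
have -> : \sum_(j < n) (ef t) 0 j * x 0 j = \sum_i w i * x 0 (t i).
  under eq_bigr do rewrite mxE.
  under eq_bigr do rewrite mulr_suml.
  under eq_bigr => j _ do rewrite big_mkcond.
  rewrite exchange_big /=; apply: eq_bigr => i _.
  rewrite -big_mkcond /= (big_pred1 (t i)) // => j; by rewrite /= eq_sym.
rewrite [RHS](eq_bigr _ (fun i _ => mulrBr _ _ _)) sumrB addrC.
by [].
Qed.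

Definition tx x : {ffun 'I_m -> 'I_n} := [ffun i => am x i].

Lemma tv_max t x : tv cf ef t x <= tv cf ef (tx x) x.
Proof.
rewrite !tv_F; apply: ler_sum => i _; rewrite ffunE; apply: ler_wpM2l; [exact: ltW | exact: am_ge].
Qed.

Lemma tv_eq t x : tv cf ef t x = tv cf ef (tx x) x <-> forall i, t i \in argmaxset V x i.
Proof.
split.
  move=> H i.
  have H0 : \sum_i (w i * (x 0 (am x i) - V i (am x i)) - w i * (x 0 (t i) - V i (t i))) = 0.
    have E1 : \sum_i w i * (x 0 (am x i) - V i (am x i)) = tv cf ef (tx x) x.
      by rewrite tv_F; apply: eq_bigr => k _; rewrite ffunE.
    by rewrite sumrB E1 -tv_F -H subrr.
  have Hnn : forall k : 'I_m, true -> 0 <= w k * (x 0 (am x k) - V k (am x k)) - w k * (x 0 (t k) - V k (t k)).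
    move=> k _; rewrite subr_ge0; apply: ler_wpM2l; [exact: ltW | exact: am_ge].
  have := psumr_eq0P Hnn H0 (i:=i) isT.
  move/eqP; rewrite subr_eq0 => /eqP/mulfI => /(_ (lt0r_neq0 (hw i))) E.
  by apply/inS => k; rewrite -E am_ge.
move=> H; rewrite !tv_F; apply: eq_bigr => i _; rewrite ffunE; congr (_ * _).
by apply/eqP; rewrite eq_le am_ge; move/inS: (H i) => ->.
Qed.

Let t0 : {ffun 'I_m -> 'I_n} := [ffun _ => j0].

Lemma tval_tx x : Defs.tval cf ef x = tv cf ef (tx x) x.
Proof.
apply/eqP; rewrite eq_le tv_le andbT.
by case: (@tv_ex _ _ _ cf ef t0 x) => t <-; apply: tv_max.
Qed.

Lemma key t x : tv cf ef t x = Defs.tval cf ef x <-> forall i, t i \in argmaxset V x i.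
Proof. by rewrite tval_tx tv_eq. Qed.

Lemma cell_iff x y : NCcell cf ef x y <-> forall i, argmaxset V x i \subset argmaxset V y i.
Proof.
split; last first.
  move=> H a /Bset_iff [t [<- Ht]]; apply/Bset_iff; exists t; split => //.
  apply/key => i; move/key: Ht => /(_ i) Ht; exact: (subsetP (H i)).
move=> H i; apply/subsetP => j Hj.
pose t : {ffun 'I_m -> 'I_n} := [ffun k => if k == i then j else am x k].
have Ht : tv cf ef t x = Defs.tval cf ef x.
  by apply/key => k; rewrite ffunE; case: eqP => [->|_] //; apply: am_in.
have : ef t \in Bset cf ef y by apply: H; apply/Bset_iff; exists t.
case/Bset_iff => t' [Ht' Hy].
have := transfer Ht Ht' Hy; move/key => /(_ i).
by rewrite ffunE eqxx.
Qed.

Lemma cell_eq x : NCcell cf ef x = fun y => forall i, argmaxset V x i \subset argmaxset V y i.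
Proof.
apply: functional_extensionality => y; apply: propositional_extensionality; exact: cell_iff.
Qed.
End F.

Section Cov.
Variables (R : realFieldType) (m n : nat) (V : 'M[R]_(m, n)).

Definition mu (x : 'rV[R]_n) := (\sum_i #|argmaxset V x i|)%N.
Definition mid (x y : 'rV[R]_n) : 'rV[R]_n := \row_j ((x 0 j + y 0 j) / 2).

Lemma mid_S (S : {ffun 'I_m -> {set 'I_n}}) x y : (forall i, S i != set0) ->
  covcell V S x -> covcell V S y ->
  forall i, argmaxset V (mid x y) i = argmaxset V x i :&: argmaxset V y i.
Proof.
move=> HS [_ Hx] [_ Hy] i; apply/setP => j; rewrite in_setI.
apply/idP/idP.
  move/inS => Hz; case/set0Pn: (HS i) => k0 Hk0.
  have /inS Hxk := subsetP (Hx i) _ Hk0.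
  have /inS Hyk := subsetP (Hy i) _ Hk0.
  have Hzk := Hz k0; rewrite !mxE in Hzk.
  have Hx' := Hxk j; have Hy' := Hyk j.
  apply/andP; split; apply/inS => k.
    by have := Hxk k; lra.
  by have := Hyk k; lra.
case/andP => /inS Hxj /inS Hyj; apply/inS => k; rewrite !mxE.
by have := Hxj k; have := Hyj k; lra.
Qed.

Lemma mid_H x y : Hyp x -> Hyp y -> Hyp (mid x y).
Proof.
rewrite /Hyp => Hx Hy; under eq_bigr do rewrite mxE.
by rewrite -mulr_suml big_split /= Hx Hy addr0 mul0r.
Qed.

Lemma step (S : {ffun 'I_m -> {set 'I_n}}) x : (forall i, S i != set0) -> covcell V S x ->
  ~ (forall y, covcell V S y -> forall i, argmaxset V x i \subset argmaxset V y i) ->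
  exists z, covcell V S z /\ (mu z < mu x)%N.
Proof.
move=> HS Hx Hn.
have [y [Hy [i Hi]]] : exists y, covcell V S y /\ exists i, ~~ (argmaxset V x i \subset argmaxset V y i).
  apply: NNPP => Hc; apply: Hn => y Hy i.
  case: (boolP (argmaxset V x i \subset argmaxset V y i)) => // Hns.
  by exfalso; apply: Hc; exists y; split => //; exists i.
have E := mid_S HS Hx Hy.
exists (mid x y); split.
  split; first by apply: mid_H; [case: Hx | case: Hy].
  move=> k; rewrite E subsetI; case: Hx => _ ->; by case: Hy => _ ->.
rewrite /mu (bigD1 i) //= [X in (_ < X)%N](bigD1 i) //= -addSn; apply: leq_add.
  by rewrite E; apply: proper_card; apply: properIl.
apply: leq_sum => k _; rewrite E; apply: subset_leq_card; apply: subsetIl.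
Qed.

Lemma min_ex (S : {ffun 'I_m -> {set 'I_n}}) : (forall i, S i != set0) -> forall k x,
  covcell V S x -> (mu x <= k)%N -> exists x', covcell V S x' /\
  forall y, covcell V S y -> forall i, argmaxset V x' i \subset argmaxset V y i.
Proof.
move=> HS; elim=> [|k IH] x Hx Hk;
  (case: (classic (forall y, covcell V S y -> forall i, argmaxset V x i \subset argmaxset V y i)) => [H|H]; [by exists x|]);
  case: (step HS Hx H) => z [Hz Hlt].
  by have := leq_trans Hlt Hk.
by apply: (IH z Hz); have := leq_trans Hlt Hk.
Qed.
End Cov.

Theorem lemma2p13 (R : realFieldType) (m n : nat) (V : 'M[R]_(m, n)) (w : 'I_m -> R) :
  (0 < n)%N -> (forall i, 0 < w i) ->
  NC (fVw_coef V (fun _ => 1)) (fVw_exp (fun _ => 1))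
    = NC (fVw_coef V w) (fVw_exp w)
  /\ covdec V = NCbar (fVw_coef V w) (fVw_exp w).
Proof.
move=> hn hw.
have E1 := cell_eq V hn (w := fun _ => 1) (fun _ => ltr01).
have E2 := cell_eq V hn hw.
split.
  apply: functional_extensionality => C; apply: propositional_extensionality.
  by split => -[x ->]; exists x; rewrite E1 E2.
apply: functional_extensionality => D; apply: propositional_extensionality.
split.
  case=> S [HS [[x0 Hx0] ->]].
  case: (min_ex HS Hx0 (leqnn _)) => x [Hx Hmin].
  exists (NCcell (fVw_coef V w) (fVw_exp w) x); split; first by exists x.
  apply: functional_extensionality => y; apply: propositional_extensionality.
  rewrite E2; split.
    by move=> Hy; split; [exact: Hmin | case: Hy].
  case=> Hxy Hyy; split => // i; apply: subset_trans (Hxy i); by case: Hx => _ ->.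
case=> C [[x ->] ->].
exists [ffun i => argmaxset V x i]; split.
  move=> i; rewrite ffunE; apply/set0Pn; exists (am V hn x i); exact: am_in.
split.
  pose a := (\sum_k x 0 k) / n%:R.
  exists (\row_j (x 0 j - a)); split.
    rewrite /Hyp; under eq_bigr do rewrite mxE.
    rewrite sumrB sumr_const card_ord /a -[(_ / _) *+ n]mulr_natr divfK ?subrr //.
    by rewrite pnatr_eq0 -lt0n hn.
  move=> i; rewrite ffunE; apply/subsetP => j; rewrite !inE => /forallP H.
  apply/forallP => k; rewrite !mxE.
  by rewrite ![_ - a - _]addrAC lerD2r; apply: H.
apply: functional_extensionality => y; apply: propositional_extensionality.
rewrite E2 /covcell; split.
  by case=> H1 H2; split => // i; rewrite ffunE; apply: H1.
by case=> H1 H2; split => // i; have := H2 i; rewrite ffunE.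
Qed.
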